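(* The Bass stable rank of the ring $s'(\mathbb{Z}^d)$ (for any $d\ge1$) is $1$.
   Context: For $\mathbf{n}\in\mathbb{Z}^d$, $\|\mathbf{n}\|_1$ denotes the $1$-norm. $s'(\mathbb{Z}^d)$ is the set of all maps $\mathbf{a}:\mathbb{Z}^d\to\mathbb{C}$ for which there exist $M>0$ and $k\in\mathbb{N}$ with $|\mathbf{a}(\mathbf{n})|\le M(1+\|\mathbf{n}\|_1)^k$ for all $\mathbf{n}\in\mathbb{Z}^d$; it is a commutative unital ring under pointwise operations, with unit the constant function $1$. For a commutative unital ring $R$ with $1\neq 0$: an $N$-tuple $(a_1,\dots,a_N)\in R^N$ is invertible (unimodular) if there is $(b_1,\dots,b_N)\in R^N$ with $b_1a_1+\cdots+b_Na_N=1$; $U_N(R)$ denotes the set of such tuples. An $(N+1)$-tuple $(a_1,\dots,a_N,\alpha)\in U_{N+1}(R)$ is reducible if there exist $h_1,\dots,h_N\in R$ with $(a_1+h_1\alpha,\dots,a_N+h_N\alpha)\in U_N(R)$. The Bass stable rank of $R$ is the smallest integer $N\ge1$ such that every element of $U_{N+1}(R)$ is reducible (and $\infty$ if no such $N$ exists). *)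

(* Defs.v *)
From HB Require Import structures.
From mathcomp Require Import all_boot all_order all_algebra.
From mathcomp Require Import complex.
From mathcomp Require Import Rstruct.
Set Implicit Arguments. Unset Strict Implicit. Unset Printing Implicit Defensive.
Import Order.TTheory GRing.Theory Num.Theory.
Local Open Scope ring_scope.

Definition CC : Type := (Rdefinitions.R)[i].

Definition Zd (d : nat) : Type := 'rV[int]_d.

Definition norm1 (d : nat) (n : Zd d) : nat := (\sum_(i < d) `|n ord0 i|)%N.

Definition seqfun (d : nat) : Type := Zd d -> CC.

Definition in_sprime (d : nat) (a : seqfun d) : Prop :=
  exists (M : Rdefinitions.R) (k : nat), 0 < M /\
    forall n : Zd d, ComplexField.Normc.normc (a n) <= M * (1 + (norm1 n)%:R) ^+ k.

Definition sadd d (a b : seqfun d) : seqfun d := fun n => a n + b n.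
Definition smul d (a b : seqfun d) : seqfun d := fun n => a n * b n.
Definition sone d : seqfun d := fun _ => 1.

Definition seq_eq d (a b : seqfun d) : Prop := forall n, a n = b n.

Definition unimodular (d N : nat) (a : 'I_N -> seqfun d) : Prop :=
  (forall i, in_sprime (a i)) /\
  exists b : 'I_N -> seqfun d,
    (forall i, in_sprime (b i)) /\
    seq_eq (fun n => \sum_(i < N) smul (b i) (a i) n) (@sone d).

Definition extend (d N : nat) (a : 'I_N -> seqfun d) (alpha : seqfun d)
  : 'I_N.+1 -> seqfun d :=
  fun i => if unlift ord_max i is Some j then a j else alpha.

Definition reducible (d N : nat) (a : 'I_N -> seqfun d) (alpha : seqfun d) : Prop :=
  exists h : 'I_N -> seqfun d,
    (forall i, in_sprime (h i)) /\
    unimodular (fun i => sadd (a i) (smul (h i) alpha)).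

Definition every_reducible (d N : nat) : Prop :=
  forall (a : 'I_N -> seqfun d) (alpha : seqfun d),
    unimodular (extend a alpha) -> reducible a alpha.

Definition bass_stable_rank_eq (d N : nat) : Prop :=
  (1 <= N)%N /\ every_reducible d N /\
  forall M : nat, (1 <= M)%N -> every_reducible d M -> (N <= M)%N.

(* Main.v *)
Require Import Defs.
From mathcomp Require Import all_boot all_order all_algebra.
From mathcomp Require Import complex Rstruct lra.
Set Implicit Arguments. Unset Strict Implicit. Unset Printing Implicit Defensive.
Import Order.TTheory GRing.Theory Num.Theory.
Local Open Scope ring_scope.

Notation RR := Rdefinitions.R.
Notation nc := (@ComplexField.Normc.normc RR).

Lemma nc_ge0 (z : CC) : 0 <= nc z.
Proof. by case: z => x y /=; rewrite sqrtr_ge0. Qed.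

Definition NN d (n : Zd d) : RR := 1 + (norm1 n)%:R.

Lemma NN_ge1 d (n : Zd d) : 1 <= NN n.
Proof. by rewrite /NN lerDl ler0n. Qed.

Lemma NN_pow_ge1 d (n : Zd d) k : 1 <= NN n ^+ k.
Proof. exact: exprn_ege1 (NN_ge1 n). Qed.

Lemma NN_pow_le d (n : Zd d) k1 k2 : (k1 <= k2)%N -> NN n ^+ k1 <= NN n ^+ k2.
Proof. by move=> h; apply: (ler_weXn2l (NN_ge1 n)). Qed.

Lemma sprime_add d (a b : seqfun d) :
  in_sprime a -> in_sprime b -> in_sprime (sadd a b).
Proof.
move=> [Ma [ka [Ma0 Ha]]] [Mb [kb [Mb0 Hb]]].
exists (Ma + Mb), (ka + kb)%N; split; first by rewrite addr_gt0.
move=> n; rewrite /sadd.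
apply: (le_trans (le_normcD _ _)).
have e1 := NN_pow_le n (leq_addr kb ka).
have e2 := NN_pow_le n (leq_addl ka kb).
have h1 := Ha n; have h2 := Hb n.
rewrite -/(NN n) in h1 h2 *.
rewrite mulrDl; apply: lerD.
  apply: (le_trans h1); exact: (ler_wpM2l (ltW Ma0) e1).
apply: (le_trans h2); exact: (ler_wpM2l (ltW Mb0) e2).
Qed.

Lemma sprime_mul d (a b : seqfun d) :
  in_sprime a -> in_sprime b -> in_sprime (smul a b).
Proof.
move=> [Ma [ka [Ma0 Ha]]] [Mb [kb [Mb0 Hb]]].
exists (Ma * Mb), (ka + kb)%N; split; first by rewrite mulr_gt0.
move=> n; rewrite /smul ComplexField.Normc.normcM.
have h1 := Ha n; have h2 := Hb n.
rewrite -/(NN n) in h1 h2 *.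
rewrite exprD mulrACA; apply: ler_pM => //; exact: nc_ge0.
Qed.

Lemma low1 (x y : RR) : 0 <= x -> 0 <= y -> y <= 2 * x -> x + y <= 3 * x.
Proof. move=> *; lra. Qed.
Lemma low2 (x y z : RR) : 0 <= x -> 0 <= y -> 2 * x < y -> y <= z + x -> x + y <= 3 * z.
Proof. move=> *; lra. Qed.
Lemma low3 (p s z : RR) : 0 <= p -> 1 <= p * s -> s <= 3 * z -> 1 <= 3 * p * z.
Proof. move=> *; nra. Qed.

Lemma every1 d : every_reducible d 1.
Proof.
move=> a alpha [Hs [b [Hb Hsum]]].
have E0 : extend a alpha ord0 = a ord0.
  have -> : (ord0 : 'I_2) = lift ord_max ord0 by apply/val_inj.
  by rewrite /extend liftK.
have E1 : extend a alpha ord_max = alpha by rewrite /extend unlift_none.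
set a0 := a ord0.
have Ha0 : in_sprime a0 by rewrite /a0 -E0.
have Hal : in_sprime alpha by rewrite -E1.
set b0 := b ord0; set b1 := b ord_max.
have Hid : forall n, b0 n * a0 n + b1 n * alpha n = 1.
  move=> n; have := Hsum n; rewrite big_ord_recl big_ord1 /smul /sone.
  have -> : lift (ord0 : 'I_2) (ord0 : 'I_1) = ord_max by apply/val_inj.
  by rewrite E0 E1.
pose h : seqfun d := fun n => if nc (alpha n) <= 2 * nc (a0 n) then 0 else 1.
have Hh : in_sprime h.
  exists 1, 0%N; split => // n; rewrite expr0 mulr1 /h.
  by case: ifP => _; rewrite ?ComplexField.Normc.normc0 ?ComplexField.Normc.normc1.
pose u : seqfun d := fun n => a0 n + h n * alpha n.
have Hu : in_sprime u by apply: sprime_add => //; apply: sprime_mul.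
have [M0 [k0 [M00 HB0]]] : in_sprime b0 by apply: Hb.
have [M1 [k1 [M10 HB1]]] : in_sprime b1 by apply: Hb.
pose P (n : Zd d) := (M0 + M1) * NN n ^+ (k0 + k1).
have key : forall n, 1 <= 3 * P n * nc (u n).
  move=> n.
  have x0 := nc_ge0 (a0 n); have y0 := nc_ge0 (alpha n).
  have z0 := nc_ge0 (u n).
  have P0 : 0 <= P n.
    rewrite /P; apply: mulr_ge0; first by rewrite addr_ge0 // ltW.
    by rewrite exprn_ge0 // (le_trans ler01 (NN_ge1 n)).
  have low : nc (a0 n) + nc (alpha n) <= 3 * nc (u n).
    rewrite /u /h; case: ifP => hc.
      by rewrite mul0r addr0; apply: low1.
    move/negbT: hc; rewrite -ltNge => hc.
    have t : nc (alpha n) <= nc (a0 n + alpha n) + nc (a0 n).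
      have := le_normcD (a0 n + alpha n) (- a0 n).
      by rewrite normcN addrAC subrr add0r.
    by rewrite mul1r; apply: low2.
  have one : 1 <= P n * (nc (a0 n) + nc (alpha n)).
    have := le_normcD (b0 n * a0 n) (b1 n * alpha n).
    rewrite Hid ComplexField.Normc.normc1 !ComplexField.Normc.normcM => tt.
    apply: (le_trans tt).
    have hb0 := HB0 n; have hb1 := HB1 n; rewrite -/(NN n) in hb0 hb1.
    have e1 := NN_pow_le n (leq_addr k1 k0).
    have e2 := NN_pow_le n (leq_addl k0 k1).
    have q0 : nc (b0 n) <= P n.
      apply: (le_trans hb0); apply: ler_pM => //.
      - exact: ltW.
      - exact: le_trans ler01 (NN_pow_ge1 n k0).
      - by rewrite lerDl ltW.
    have q1 : nc (b1 n) <= P n.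
      apply: (le_trans hb1); apply: ler_pM => //.
      - exact: ltW.
      - exact: le_trans ler01 (NN_pow_ge1 n k1).
      - by rewrite lerDr ltW.
    rewrite mulrDr; apply: lerD.
      exact: (ler_wpM2r (nc_ge0 _) q0).
    exact: (ler_wpM2r (nc_ge0 _) q1).
  exact: low3 P0 one low.
exists (fun _ => h); split => [i|]; first exact: Hh.
split.
  by move=> i; rewrite (ord1 i); exact: Hu.
exists (fun _ n => (u n)^-1); split.
  move=> i; exists (3 * (M0 + M1)), (k0 + k1)%N; split.
    by rewrite mulr_gt0 // addr_gt0.
  move=> n; rewrite ComplexField.Normc.normcV -/(NN n) -mulrA -/(P n).
  have k := key n.
  have z0 : 0 < nc (u n).
    rewrite lt_def nc_ge0 andbT; apply/eqP => e; move: k; rewrite e mulr0; lra.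
  rewrite -[_^-1]mulr1; apply: (le_trans (ler_wpM2l _ k)).
    by rewrite invr_ge0 ltW.
  by rewrite [X in X <= _]mulrC -!mulrA mulfV ?mulr1 // gt_eqF.
move=> n; rewrite big_ord1 /smul /sone /sadd -/(u n).
apply: mulVf; apply/eqP => e; have := key n.
by rewrite e ComplexField.Normc.normc0 mulr0 ler10.
Qed.

Theorem theorem1p4 (d : nat) : (1 <= d)%N -> bass_stable_rank_eq d 1.
Proof.
move=> _; split => //; split; first exact: every1.
by [].
Qed.
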